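(* Let $X$ be a K3 surface with $\rho(X)=2$, let $a_1,b_1,c\in\mathbb N$, and let $\widetilde H\in N(X)$ be primitive with $\widetilde H^2=2a_1b_1c^2$ and $\widetilde H\cdot N(X)=\gamma\mathbb Z$ where $\gamma\mid 2a_1b_1$. Put $n=2a_1b_1c^2/\gamma$. Let $K(\widetilde H)=\widetilde H^\perp=\mathbb Zf(\widetilde H)$ in $N(X)$ and define $\delta$ by $\det N(X)=-\gamma\delta$. Then $\delta\in\mathbb N$, $f(\widetilde H)^2=-2a_1b_1c^2\delta/\gamma$, and there is $\mu$ coprime to $n$ with $\delta\equiv\mu^2\gamma\pmod{4a_1b_1c^2/\gamma}$ such that $$N(X)=\Big[\widetilde H,\ f(\widetilde H),\ \frac{\mu\widetilde H+f(\widetilde H)}{n}\Big]=\Big\{\frac{x\widetilde H+yf(\widetilde H)}{n}:\ x,y\in\mathbb Z,\ x\equiv\mu y\pmod n\Big\},$$ and for such $z=(x\widetilde H+yf(\widetilde H))/n$ one has $z^2=(\gamma x^2-\delta y^2)/n$. The class $\pm\mu\bmod n$ (the invariant of the pair $\widetilde H\in N(X)$) is independent of the sign of $f(\widetilde H)$ up to $\pm$. For any primitive $P\in N(X)$ with $P^2=2a_1b_1c^2$, $P\cdot N(X)=\gamma\mathbb Z$ and the same invariant $\pm\mu$, there is an isometry $\phi\in O(N(X))$ with $\phi(\widetilde H)=P$.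
   Context: $N(X)$ denotes the Picard lattice of the K3 surface $X$ (an even hyperbolic lattice of rank $\rho(X)$). For a primitive $P\in N(X)$ with $P^2=2a_1b_1c^2$ and $P\cdot N(X)=\gamma\mathbb Z$, its invariant is the class $\pm\mu_P\bmod n$ of an integer $\mu_P$ with $(\mu_PP+f(P))/n\in N(X)$, where $f(P)$ generates $P^\perp$ in $N(X)$. $O(N(X))$ is the isometry group of $N(X)$. *)

(* Defs.v *)
From HB Require Import structures.
From mathcomp Require Import all_boot all_order all_algebra.
Set Implicit Arguments. Unset Strict Implicit. Unset Printing Implicit Defensive.
Import Order.TTheory GRing.Theory Num.Theory.
Local Open Scope ring_scope.

(* A rank-2 even lattice N, written in a Z-basis (e1,e2) with Gram matrix
     [[2a, b], [b, 2c]]   (a b c : int).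
   Lattice vectors are pairs of integers (coordinates in the basis). *)
Definition vec := (int * int)%type.

Definition vadd (u v : vec) : vec := (u.1 + v.1, u.2 + v.2).
Definition vscale (k : int) (u : vec) : vec := (k * u.1, k * u.2).

Definition bil (a b c : int) (u v : vec) : int :=
  2 * a * u.1 * v.1 + b * (u.1 * v.2 + u.2 * v.1) + 2 * c * u.2 * v.2.

Definition gram_det (a b c : int) : int := 4 * a * c - b ^+ 2.

(* N is hyperbolic (signature (1,1)) *)
Definition hyperbolic (a b c : int) : Prop := gram_det a b c < 0.

Definition primitive (v : vec) : Prop := gcdz v.1 v.2 = 1.

Definition pairing_ideal (a b c : int) (P : vec) (g : int) : Prop :=
  forall k : int, (exists v : vec, bil a b c P v = k) <-> (g %| k)%Z.

Definition gen_perp (a b c : int) (P f : vec) : Prop :=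
  forall v : vec, bil a b c P v = 0 <-> exists k : int, v = vscale k f.

(* (w / n) belongs to N, i.e. n divides w in the lattice *)
Definition divisible_in (n : int) (w : vec) : Prop :=
  exists z : vec, vscale n z = w.

(* m is a representative of the invariant of P (w.r.t. modulus n):
   (m P + f(P)) / n is in N for some generator f(P) of P^perp *)
Definition is_invariant (a b c n : int) (P : vec) (m : int) : Prop :=
  exists fP : vec, gen_perp a b c P fP /\ divisible_in n (vadd (vscale m P) fP).

Definition pm_eq (n m m' : int) : Prop :=
  (m == m' %[mod n])%Z \/ (m == - m' %[mod n])%Z.

(* isometries of N: Z-linear automorphisms (matrix [[p, q], [r, s]] acting on
   coordinate columns, with determinant +-1) preserving the form *)
Definition apply_mx (p q r s : int) (v : vec) : vec :=
  (p * v.1 + q * v.2, r * v.1 + s * v.2).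

Definition lattice_isometry (a b c : int) (p q r s : int) : Prop :=
  (p * s - q * r = 1 \/ p * s - q * r = -1) /\
  forall u v : vec, bil a b c (apply_mx p q r s u) (apply_mx p q r s v) = bil a b c u v.

(* Main.v *)
Require Import Defs.
From HB Require Import structures.
From mathcomp Require Import all_boot all_order all_algebra.
From mathcomp Require Import zify ring lra.
Import Order.TTheory GRing.Theory Num.Theory.
Local Open Scope ring_scope.

Lemma bil_lin a b c x y x' y' u w :
  bil a b c (vadd (vscale x u) (vscale y w)) (vadd (vscale x' u) (vscale y' w)) =
  x * x'*bil a b c u u + (x * y' + y * x') * bil a b c u w + y * y'*bil a b c w w.
Proof. case: u => u1 u2; case: w => w1 w2; rewrite /bil /=; ring. Qed.

Lemma bil_scale a b c n u v :
  bil a b c (vscale n u) (vscale n v) = n * n * bil a b c u v.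
Proof. case: u => u1 u2; case: v => w1 w2; rewrite /bil /=; ring. Qed.

Lemma vscale1 (u : vec) : u = vscale 1 u.
Proof. by case: u => u1 u2; rewrite /vscale /= !mul1r. Qed.

Lemma unit_int (k m : int) : k * m = 1 -> m * m = 1.
Proof. move=> /(congr1 absz); rewrite abszM => /eqP; rewrite muln_eq1 => /andP[_ /eqP hm].
have : m = 1 \/ m = -1 by lia.
by case=> ->.
Qed.

Lemma perp_form (a b c g : int) (P f : vec) : 0 < g -> pairing_ideal a b c P g ->
  gen_perp a b c P f ->
  exists e l1 l2 : int, (e * e = 1) /\ (g * l1 = 2 * a * P.1 + b * P.2) /\
    (g * l2 = b * P.1 + 2 * c * P.2) /\ (f = (e * l2, - (e * l1))) /\
    (bil a b c P f = 0) /\ exists v : vec, l1 * v.1 + l2 * v.2 = 1.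
Proof.
case: P => p1 p2 /= g0 hpi hperp.
have g0' : g != 0 by rewrite gt_eqF.
have /dvdzP [l1 e1] : (g %| (2 * a * p1 + b * p2))%Z.
  apply/(hpi _).1; exists (1, 0); rewrite /bil /=; ring.
have /dvdzP [l2 e2] : (g %| (b * p1 + 2 * c * p2))%Z.
  apply/(hpi _).1; exists (0, 1); rewrite /bil /=; ring.
have [[v1 v2] hv] : exists v : vec, bil a b c (p1, p2) v = g.
  by apply/(hpi g).2; exact: dvdzz.
have hv' : l1 * v1 + l2 * v2 = 1.
  apply: (mulfI g0'); rewrite mulr1 -[RHS]hv /bil /=.
  transitivity ((g * l1) * v1 + (g * l2) * v2); first by ring.
  rewrite ![g * _]mulrC -e1 -e2; ring.
have hf0 : bil a b c (p1, p2) f = 0 by apply/(hperp f).2; exists 1; exact: vscale1.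
case: f hperp hf0 => f1 f2 hperp hf0.
have hlf : l1 * f1 + l2 * f2 = 0.
  apply: (mulfI g0'); rewrite mulr0 -[RHS]hf0 /bil /=.
  transitivity ((g * l1) * f1 + (g * l2) * f2); first by ring.
  rewrite ![g * _]mulrC -e1 -e2; ring.
set m := f1 * v2 - f2 * v1.
have ef1 : f1 = m * l2.
  transitivity (f1 * (l1 * v1 + l2 * v2)); first by rewrite hv' mulr1.
  transitivity (v1 * (l1 * f1 + l2 * f2) + m * l2); last by rewrite hlf; ring.
  rewrite /m; ring.
have ef2 : f2 = - (m * l1).
  transitivity (f2 * (l1 * v1 + l2 * v2)); first by rewrite hv' mulr1.
  transitivity (v2 * (l1 * f1 + l2 * f2) - m * l1); last by rewrite hlf; ring.
  rewrite /m; ring.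
have [k hk] : exists k, (l2, - l1) = vscale k (f1, f2).
  apply/(hperp _).1; rewrite /bil /=.
  transitivity ((g * l1) * l2 - (g * l2) * l1); last by ring.
  rewrite ![g * _]mulrC -e1 -e2; ring.
case: hk => hk1 hk2.
have hkm : k * m = 1.
  have : (l1 * v1 + l2 * v2) * (k * m - 1) = 0.
    transitivity (v2 * (k * (m * l2) - l2) - v1 * (k * (- (m * l1)) + l1)); first by ring.
    by rewrite -ef1 -ef2 -hk1 -hk2; ring.
  by rewrite hv' mul1r => /eqP; rewrite subr_eq0 => /eqP.
exists m, l1, l2; split; first exact: unit_int hkm.
split; first by rewrite mulrC.
split; first by rewrite mulrC.
split; first by rewrite ef1 ef2.
split; first exact: hf0.
by exists (v1, v2).
Qed.

Lemma by_bez (X Y K B : int) : B = 1 -> X - Y = K * (B - 1) -> X = Y.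
Proof. by move=> -> h; apply/eqP; rewrite -subr_eq0 h subrr mulr0. Qed.

Lemma dvd_lin (n x y : int) : (n %| x)%Z -> (n %| y)%Z -> forall k l, (n %| (k * x + l * y))%Z.
Proof.
move=> /dvdzP [t ->] /dvdzP [t' ->] k l; apply/dvdzP; exists (k * t + l * t'); ring.
Qed.

Lemma ff_gen (a b c g e l1 l2 : int) (P : vec) : e * e = 1 ->
  g * l1 = 2 * a * P.1 + b * P.2 -> g * l2 = b * P.1 + 2 * c * P.2 ->
  g * (g * bil a b c (e * l2, - (e * l1)) (e * l2, - (e * l1))) = gram_det a b c * bil a b c P P.
Proof.
move=> he h1 h2.
transitivity (2 * (e * e) * (a * (g * l2) ^+ 2 - b * (g * l1) * (g * l2) + c * (g * l1) ^+ 2)).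
  rewrite /bil /=; ring.
rewrite he h1 h2; case: P {h1 h2} => p1 p2 /=; rewrite /bil /gram_det /=; ring.
Qed.

Lemma det_lemma a b c p q r s :
  (forall u v, bil a b c (apply_mx p q r s u) (apply_mx p q r s v) = bil a b c u v) ->
  gram_det a b c != 0 -> p * s - q * r = 1 \/ p * s - q * r = -1.
Proof.
move=> H D0.
have id : bil a b c (apply_mx p q r s (1, 0)) (apply_mx p q r s (1, 0)) *
          bil a b c (apply_mx p q r s (0, 1)) (apply_mx p q r s (0, 1)) -
          bil a b c (apply_mx p q r s (1, 0)) (apply_mx p q r s (0, 1)) ^+ 2 =
          (p * s - q * r) ^+ 2 * gram_det a b c.
  rewrite /bil /apply_mx /gram_det /=; ring.
rewrite !H in id.
have id2 : bil a b c (1, 0) (1, 0) * bil a b c (0, 1) (0, 1) - bil a b c (1, 0) (0, 1) ^+ 2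
   = 1 * gram_det a b c by rewrite /bil /gram_det /=; ring.
rewrite id2 in id.
have := mulIf D0 id => /esym /eqP; rewrite sqrf_eq1 => /orP [/eqP -> | /eqP ->]; by [left | right].
Qed.

Lemma shift1 (n mu t : int) (P f z : vec) : vscale n z = vadd (vscale (mu + t * n) P) f ->
  vscale n (vadd z (vscale (- t) P)) = vadd (vscale mu P) f.
Proof.
case: P => P1 P2; case: f => f1 f2; case: z => z1 z2; rewrite /vscale /vadd /= => -[e1 e2].
congr pair.
  by transitivity (n * z1 - t * n * P1); [ring | rewrite e1; ring].
by transitivity (n * z2 - t * n * P2); [ring | rewrite e2; ring].
Qed.

Lemma shift2 (n mu t : int) (P f z : vec) : vscale n z = vadd (vscale (- mu + t * n) P) f ->
  vscale n (vadd (vscale (-1) z) (vscale t P)) = vadd (vscale mu P) (vscale (-1) f).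
Proof.
case: P => P1 P2; case: f => f1 f2; case: z => z1 z2; rewrite /vscale /vadd /= => -[e1 e2].
congr pair.
  by transitivity (- (n * z1) + t * n * P1); [ring | rewrite e1; ring].
by transitivity (- (n * z2) + t * n * P2); [ring | rewrite e2; ring].
Qed.

Lemma bil_neg a b c (u v : vec) : bil a b c u (vscale (-1) v) = - bil a b c u v.
Proof. case: u => u1 u2; case: v => v1 v2; rewrite /bil /vscale /=; ring. Qed.
Theorem proposition3p1p1
  (a b c : int) (a1 b1 c0 g : int) (H f : vec) :
  hyperbolic a b c ->
  0 < a1 -> 0 < b1 -> 0 < c0 ->
  primitive H ->
  bil a b c H H = 2 * a1 * b1 * c0 ^+ 2 ->
  0 < g ->
  pairing_ideal a b c H g ->
  (g %| 2 * a1 * b1)%Z ->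
  gen_perp a b c H f ->
  let n := ((2 * a1 * b1 * c0 ^+ 2) %/ g)%Z in
  (exists delta : int,
     0 < delta /\
     gram_det a b c = - (g * delta) /\
     g * bil a b c f f = - (2 * a1 * b1 * c0 ^+ 2 * delta) /\
     exists mu : int,
       coprimez mu n /\
       (delta == mu ^+ 2 * g %[mod 2 * n])%Z /\
       (* N = [H, f, (mu H + f)/n] = {(xH + yf)/n : x = mu y mod n} *)
       divisible_in n (vadd (vscale mu H) f) /\
       (forall z : vec, exists x y : int,
            (x == mu * y %[mod n])%Z /\ vscale n z = vadd (vscale x H) (vscale y f)) /\
       (forall x y : int, (x == mu * y %[mod n])%Z ->
            divisible_in n (vadd (vscale x H) (vscale y f))) /\
       (* z^2 = (g x^2 - delta y^2) / n *)
       (forall (x y : int) (z : vec), vscale n z = vadd (vscale x H) (vscale y f) ->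
            n * bil a b c z z = g * x ^+ 2 - delta * y ^+ 2) /\
       (* mu represents the invariant of H *)
       is_invariant a b c n H mu /\
       (* uniqueness of P given the invariant *)
       (forall P : vec,
          primitive P ->
          bil a b c P P = 2 * a1 * b1 * c0 ^+ 2 ->
          pairing_ideal a b c P g ->
          (exists muP : int, is_invariant a b c n P muP /\ pm_eq n muP mu) ->
          exists p q r s : int, lattice_isometry a b c p q r s /\ apply_mx p q r s H = P)) /\
  (* the invariant +-mu mod n of H is independent of the choice (sign) of f(H) *)
  (forall m m' : int, is_invariant a b c n H m -> is_invariant a b c n H m' -> pm_eq n m m').
Proof.
move=> hyp a1p b1p c0p prim hHH g0 hpi hg hperp n.
have g0' : g != 0 by rewrite gt_eqF.
set T := 2 * a1 * b1 * c0 ^+ 2 in hHH n *.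
have gT : (g %| T)%Z by rewrite /T; exact: dvdz_mulr.
have ng : n * g = T by rewrite /n divzK.
clearbody n.
have T0 : 0 < T by rewrite /T; nia.
have n0 : 0 < n by nia.
have n0' : n != 0 by rewrite gt_eqF.
have [e [l1 [l2 [he [hL1 [hL2 [hf [hHf [[v1 v2] hv]]]]]]]]] := perp_form _ _ _ _ _ _ g0 hpi hperp.
case: H prim hHH hpi hperp hL1 hL2 hHf => h1 h2 prim hHH hpi hperp hL1 hL2 hHf.
subst f.
rewrite /= in hL1 hL2 hv.
have [s1 [s2 hs]] := Bezoutz h1 h2; rewrite /primitive /= in prim; rewrite prim in hs.
have F1 : l1 * h1 + l2 * h2 = n.
  apply: (mulfI g0').
  transitivity ((g * l1) * h1 + (g * l2) * h2); first by ring.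
  rewrite hL1 hL2; transitivity (bil a b c (h1, h2) (h1, h2)); first by rewrite /bil /=; ring.
  by rewrite hHH -ng mulrC.
have [delta hdelta] : exists delta, delta = - (s1 * (2 * c * l1 - b * l2) + s2 * (2 * a * l2 - b * l1)) by eexists.
have hD : gram_det a b c = - (g * delta).
  transitivity (gram_det a b c * (s1 * h1 + s2 * h2)); first by rewrite hs mulr1.
  transitivity (s1 * (2 * c * (g * l1) - b * (g * l2)) + s2 * (2 * a * (g * l2) - b * (g * l1))).
    by rewrite hL1 hL2 /gram_det; ring.
  by rewrite hdelta; ring.
have d0 : 0 < delta by move: hyp; rewrite /hyperbolic hD; nia.
have hff : g * bil a b c (e * l2, - (e * l1)) (e * l2, - (e * l1)) = - (T * delta).
  apply: (mulfI g0'); rewrite (@ff_gen a b c g e l1 l2 (h1, h2) he hL1 hL2) hD hHH; ring.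
have [mu hmu] : exists mu, mu = e * (l1 * s2 - l2 * s1) by eexists.
have hz0 : vscale n (e * s2, - (e * s1)) = vadd (vscale mu (h1, h2)) (e * l2, - (e * l1)).
  rewrite /vscale /vadd /= -F1 hmu; congr pair.
    by apply: (@by_bez _ _ (e * l2) _ hs); ring.
  by apply: (@by_bez _ _ (- (e * l1)) _ hs); ring.
have LemA : forall (z : vec) x y, vscale n z = vadd (vscale x (h1, h2)) (vscale y (e * l2, - (e * l1))) ->
    x - mu * y = n * (s1 * z.1 + s2 * z.2).
  move=> [z1 z2] x y; rewrite /vscale /vadd /= => -[hz1 hz2].
  transitivity (x - mu * y); first by [].
  have -> : n * (s1 * z1 + s2 * z2) = s1 * (n * z1) + s2 * (n * z2) by ring.
  rewrite hz1 hz2 hmu; apply: (@by_bez _ _ (- x) _ hs); ring.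
have Dec : forall v : vec, vscale n v = vadd (vscale (l1 * v.1 + l2 * v.2) (h1, h2))
     (vscale (e * (h2 * v.1 - h1 * v.2)) (e * l2, - (e * l1))).
  move=> [w1 w2]; rewrite /vscale /vadd /= -F1; congr pair.
    by apply: (@by_bez _ _ (- (l2 * (h2 * w1 - h1 * w2))) _ he); ring.
  by apply: (@by_bez _ _ (l1 * (h2 * w1 - h1 * w2)) _ he); ring.
have zsq : forall x y (z : vec), vscale n z = vadd (vscale x (h1, h2)) (vscale y (e * l2, - (e * l1))) ->
    n * bil a b c z z = g * x ^+ 2 - delta * y ^+ 2.
  move=> x y z hz.
  have gn0 : g * n != 0 by rewrite mulf_neq0.
  apply: (mulfI gn0).
  transitivity (g * bil a b c (vscale n z) (vscale n z)); first by rewrite bil_scale; ring.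
  rewrite hz bil_lin hHH hHf.
  transitivity (x * x * g * T + y * y * (g * bil a b c (e * l2, - (e * l1)) (e * l2, - (e * l1)))); first by ring.
  by rewrite hff -ng; ring.
have hzsq0 := zsq mu 1 _ (etrans hz0 (congr1 _ (vscale1 _))).
have Inv : forall m, is_invariant a b c n (h1, h2) m ->
    (m == mu %[mod n])%Z || (m == - mu %[mod n])%Z.
  move=> m [fm [hpm [zm hzm]]].
  have [em [k1 [k2 [hem [hK1 [hK2 [hfm _]]]]]]] := perp_form _ _ _ _ _ _ g0 hpi hpm.
  rewrite /= -hL1 in hK1; rewrite /= -hL2 in hK2.
  have ek1 := mulfI g0' hK1; have ek2 := mulfI g0' hK2.
  subst k1 k2 fm.
  have hfm : (em * l2, - (em * l1)) = vscale (em * e) (e * l2, - (e * l1)).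
    rewrite /vscale /=; congr pair.
      by apply: (@by_bez _ _ (- (em * l2)) _ he); ring.
    by apply: (@by_bez _ _ (em * l1) _ he); ring.
  rewrite hfm in hzm; have hA := LemA _ _ _ hzm.
  have : (em * e) ^+ 2 == 1 by rewrite expr2 mulrACA he hem mulr1.
  rewrite sqrf_eq1 => /orP [/eqP hs1 | /eqP hs1]; rewrite hs1 in hA.
    apply/orP; left; rewrite eqz_mod_dvd; apply/dvdzP; exists (s1 * zm.1 + s2 * zm.2).
    by rewrite mulrC -hA mulr1.
  apply/orP; right; rewrite eqz_mod_dvd; apply/dvdzP; exists (s1 * zm.1 + s2 * zm.2).
  by rewrite mulrC -hA; ring.
split.
  exists delta; split; first exact: d0.
  split; first exact: hD.
  split; first exact: hff.
  exists mu.
  split.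
    apply/coprimezP.
    have hA := LemA _ _ _ (Dec (v1, v2)); rewrite /= hv in hA.
    exists (e * (h2 * v1 - h1 * v2), s1 * v1 + s2 * v2) => /=.
    by rewrite -[1](subrK (mu * (e * (h2 * v1 - h1 * v2)))) hA; ring.
  split.
    rewrite eqz_mod_dvd; apply/dvdzP.
    exists (- (a * (e * s2) ^+ 2 + b * (e * s2) * (- (e * s1)) + c * (- (e * s1)) ^+ 2)).
    transitivity (- (n * bil a b c (e * s2, - (e * s1)) (e * s2, - (e * s1)))).
      by rewrite hzsq0; ring.
    rewrite /bil /=; ring.
  split; first by exists (e * s2, - (e * s1)).
  split.
    move=> z; exists (l1 * z.1 + l2 * z.2), (e * (h2 * z.1 - h1 * z.2)); split; last exact: Dec.
    rewrite eqz_mod_dvd; apply/dvdzP; exists (s1 * z.1 + s2 * z.2).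
    by rewrite (LemA _ _ _ (Dec z)) mulrC.
  split.
    move=> x y; rewrite eqz_mod_dvd => /dvdzP [q hq].
    have hx : x = mu * y + q * n by rewrite -hq; ring.
    subst x.
    exists (vadd (vscale y (e * s2, - (e * s1))) (vscale q (h1, h2))).
    have step : vscale n (vadd (vscale y (e * s2, - (e * s1))) (vscale q (h1, h2))) =
       vadd (vscale y (vscale n (e * s2, - (e * s1)))) (vscale (q * n) (h1, h2)).
      by rewrite /vscale /vadd /=; congr pair; ring.
    rewrite step hz0 /vscale /vadd /=; congr pair; ring.
  split; first exact: zsq.
  split.
    by exists (e * l2, - (e * l1)); split; [exact: hperp | exists (e * s2, - (e * s1))].
  move=> P primP hPP hpiP [muP [[fP [hperpP [zP' hzP']]] hpm]].
  have [eP [k1 [k2 [heP [hK1 [hK2 [hfP [hPfP _]]]]]]]] := perp_form _ _ _ _ _ _ g0 hpiP hperpP.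
  have hffP : bil a b c fP fP = bil a b c (e * l2, - (e * l1)) (e * l2, - (e * l1)).
    apply: (mulfI g0'); apply: (mulfI g0').
    by rewrite hfP (@ff_gen a b c g eP k1 k2 P heP hK1 hK2) (@ff_gen a b c g e l1 l2 (h1, h2) he hL1 hL2) hPP hHH.
  have [fQ [zQ [hPfQ [hfQ hzQ]]]] : exists fQ zQ, (bil a b c P fQ = 0) /\ (bil a b c fQ fQ = bil a b c (e * l2, - (e * l1)) (e * l2, - (e * l1))) /\ (vscale n zQ = vadd (vscale mu P) fQ).
    move: hpm; rewrite /pm_eq !eqz_mod_dvd => -[/dvdzP [t ht] | /dvdzP [t ht]].
      exists fP, (vadd zP' (vscale (- t) P)); split; first exact: hPfP.
      split; first exact: hffP.
      have hm : muP = mu + t * n by rewrite -ht; ring.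
      by apply: shift1; rewrite -hm.
    exists (vscale (-1) fP), (vadd (vscale (-1) zP') (vscale t P)).
    split; first by rewrite bil_neg hPfP oppr0.
    split; first by rewrite bil_scale hffP; ring.
    have hm : muP = - mu + t * n by rewrite -ht; ring.
    by apply: shift2; rewrite -hm.
  case: P {primP hpiP hperpP hK1 hK2 hPfP hfP hzP' hffP} hPP hPfQ hzQ => P1 P2 hPP hPfQ hzQ.
  case: fQ hPfQ hfQ hzQ => fq1 fq2 hPfQ hfQ hzQ.
  case: zQ hzQ => w1 w2 hzQ.
  have [hw1 hw2] : (n * w1 = mu * P1 + fq1) /\ (n * w2 = mu * P2 + fq2) by case: hzQ.
  have efq1 : fq1 = n * w1 - mu * P1 by rewrite hw1; ring.
  have efq2 : fq2 = n * w2 - mu * P2 by rewrite hw2; ring.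
  exists (s1 * P1 + e * h2 * w1), (s2 * P1 - e * h1 * w1), (s1 * P2 + e * h2 * w2), (s2 * P2 - e * h1 * w2).
  have hM : forall u : vec, vscale n (apply_mx (s1 * P1 + e * h2 * w1) (s2 * P1 - e * h1 * w1)
        (s1 * P2 + e * h2 * w2) (s2 * P2 - e * h1 * w2) u) =
      vadd (vscale (l1 * u.1 + l2 * u.2) (P1, P2)) (vscale (e * (h2 * u.1 - h1 * u.2)) (fq1, fq2)).
    move=> [u1 u2]; have hA := LemA _ _ _ (Dec (u1, u2)); rewrite /= in hA.
    rewrite /apply_mx /vscale /vadd /= efq1 efq2; congr pair.
      transitivity ((l1 * u1 + l2 * u2 - mu * (e * (h2 * u1 - h1 * u2))) * P1 + e * (h2 * u1 - h1 * u2) * (n * w1)); last by ring.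
      by rewrite hA; ring.
    transitivity ((l1 * u1 + l2 * u2 - mu * (e * (h2 * u1 - h1 * u2))) * P2 + e * (h2 * u1 - h1 * u2) * (n * w2)); last by ring.
    by rewrite hA; ring.
  have hform : forall u v, bil a b c (apply_mx (s1 * P1 + e * h2 * w1) (s2 * P1 - e * h1 * w1)
        (s1 * P2 + e * h2 * w2) (s2 * P2 - e * h1 * w2) u) (apply_mx (s1 * P1 + e * h2 * w1) (s2 * P1 - e * h1 * w1)
        (s1 * P2 + e * h2 * w2) (s2 * P2 - e * h1 * w2) v) = bil a b c u v.
    move=> u v; have nn0 : n * n != 0 by rewrite mulf_neq0.
    apply: (mulfI nn0); rewrite -!bil_scale !hM (Dec u) (Dec v) !bil_lin hPP hPfQ hfQ hHH hHf //.
  split; first split.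
  - apply: det_lemma; first exact: hform.
    by rewrite hD oppr_eq0 mulf_neq0 // gt_eqF.
  - exact: hform.
  rewrite /apply_mx /=; congr pair.
    by apply: (@by_bez _ _ P1 _ hs); ring.
  by apply: (@by_bez _ _ P2 _ hs); ring.
move=> m m' /Inv hm /Inv hm'.
rewrite /pm_eq !eqz_mod_dvd.
move: hm hm'; rewrite !eqz_mod_dvd => /orP [hm | hm] /orP [hm' | hm'].
- left; have -> : m - m' = 1 * (m - mu) + (-1) * (m' - mu) by ring.
  exact: dvd_lin.
- right; have -> : m - - m' = 1 * (m - mu) + 1 * (m' - - mu) by ring.
  exact: dvd_lin.
- right; have -> : m - - m' = 1 * (m - - mu) + 1 * (m' - mu) by ring.
  exact: dvd_lin.
- left; have -> : m - m' = 1 * (m - - mu) + (-1) * (m' - - mu) by ring.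
  exact: dvd_lin.
Qed.
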